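(* Under the standing assumptions below, for every $\lambda\in(1-\delta,1+\delta)$ the map $s\mapsto F_{2n}(s,\lambda)$ is affine and orientation-preserving, and it depends analytically on $\lambda$. Moreover, $F_{2n}(\cdot,\lambda)$ is expanding (its slope is $>1$) if and only if $\lambda<1$, and contracting (slope $<1$) if and only if $\lambda>1$.
   Context: Let $P$ be a simply connected polygon with $d$ sides labeled $1,\dots,d$, $\partial P$ oriented anticlockwise, and let $\Phi$ be its billiard map, written in coordinates $(s,\theta)$ ($s$ the arc-length parameter on $\partial P$, $\theta\in(-\pi/2,\pi/2)$ the oriented angle from the inward normal). $\Sigma_{i,j}$ is the set of phase points on side $i$ whose next collision is on side $j$; $\beta_{i,j}$ is $\pi$ minus the angle formed by the oriented sides $i$ and $j$, so that the angle after a collision from side $i$ to side $j$ is $\beta_{i,j}-\theta$. For $\lambda>0$, $R_\lambda(s,\theta)=(s,\lambda\theta)$ and $\Phi_\lambda=R_\lambda\circ\Phi$. Let $\ell_i$ be the line supporting side $i$ and $x_i$ its arc-length parametrization extending that of side $i$. For distinct sides $i,j$, $\Phi_{i,j}(s,\theta):=(s',\beta_{i,j}-\theta)$, where $x_j(s')$ is the intersection with $\ell_j$ of the line through $x_i(s)$ whose direction makes the angle $\theta$ with the inward normal of side $i$; it is defined for all $s\in\mathbb{R}$ whenever $|\beta_{i,j}-\theta|<\pi/2$, agrees with $\Phi$ on $\Sigma_{i,j}$, and its first component is affine in $s$. Standing assumptions: $\mathcal{C}$ is a periodic cylinder of $\Phi$ (a maximal family of parallel periodic orbits with a common itinerary)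 of even period $2n>2$ with itinerary $i_0,\dots,i_{2n-1}$ (indices mod $2n$) and angles $\hat\theta_0,\dots,\hat\theta_{2n-1}$ at the successive collisions, and $\hat\theta_0=\frac{1}{2n}\sum_{k=0}^{2n-1}(-1)^{k+1}k\beta_{i_k,i_{k+1}}$. Define $\theta_0(\lambda):=\frac{1}{\lambda^{2n}-1}\sum_{k=0}^{2n-1}(-\lambda)^{2n-k}\beta_{i_k,i_{k+1}}$ (extended analytically to $\lambda=1$, where it equals $\hat\theta_0$) and $\theta_k(\lambda):=\lambda(\beta_{i_{k-1},i_k}-\theta_{k-1}(\lambda))$ for $k=1,\dots,2n$; then $\theta_k(1)=\hat\theta_k$ and $\theta_{2n}=\theta_0$. Fix $\delta>0$ such that all $\theta_k(\lambda)\in(-\pi/2,\pi/2)$ for $\lambda\in(1-\delta,1+\delta)$. For $k=1,\dots,2n$ define $F_k(s,\lambda):=\pi_1\circ R_\lambda\circ\Phi_{i_{k-1},i_k}\circ\cdots\circ R_\lambda\circ\Phi_{i_0,i_1}(s,\theta_0(\lambda))$ for $s\in\mathbb{R}$, $\lambda\in(1-\delta,1+\delta)$, where $\pi_1(s,\theta)=s$. *)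

(* Defs.v *)
From Stdlib Require Import Reals Lra.
Open Scope R_scope.

Definition pt := (R * R)%type.
Definition padd (p q : pt) : pt := (fst p + fst q, snd p + snd q).
Definition psub (p q : pt) : pt := (fst p - fst q, snd p - snd q).
Definition pscale (a : R) (p : pt) : pt := (a * fst p, a * snd p).
Definition dot (p q : pt) : R := fst p * fst q + snd p * snd q.
Definition cross (p q : pt) : R := fst p * snd q - snd p * fst q.
Definition pnorm (p : pt) : R := sqrt (dot p p).
Definition rotate (a : R) (p : pt) : pt :=
  (cos a * fst p - sin a * snd p, sin a * fst p + cos a * snd p).

(* oriented angle from u to v (unit vectors), taken in [0, 2 PI) *)
Definition oriented_angle (u v : pt) : R :=
  if Rle_dec 0 (cross u v) then acos (dot u v) else 2 * PI - acos (dot u v).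

Fixpoint rsum (f : nat -> R) (m : nat) : R :=
  match m with O => 0 | S m' => rsum f m' + f m' end.

(* ---------- the polygon ----------
   d sides labelled 0..d-1 (the paper's 1..d); side i goes from vertex
   vtx i to vertex vtx (i+1), indices mod d; boundary oriented anticlockwise. *)
Section Polygon.
Variables (d : nat) (V : nat -> pt).

Definition vtx (i : nat) : pt := V (i mod d).
Definition sdir (i : nat) : pt := psub (vtx (S i)) (vtx i).
Definition slen (i : nat) : R := pnorm (sdir i).
Definition tang (i : nat) : pt := pscale (/ slen i) (sdir i).
(* inward unit normal: left normal, since the boundary is anticlockwise *)
Definition inn (i : nat) : pt := rotate (PI / 2) (tang i).

Fixpoint arc (i : nat) : R :=
  match i with O => 0 | S i' => arc i' + slen i' end.

(* x_i : arc-length parametrisation of the line l_i supporting side i *)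
Definition xline (i : nat) (s : R) : pt := padd (vtx i) (pscale (s - arc i) (tang i)).

Definition on_side_int (s : R) (i : nat) : Prop :=
  (i < d)%nat /\ arc i < s < arc (S i).

Definition seg_pt (i : nat) (t : R) : pt := padd (vtx i) (pscale t (sdir i)).

Definition on_boundary (q : pt) : Prop :=
  exists i t, (i < d)%nat /\ 0 <= t <= 1 /\ q = seg_pt i t.

(* simple (simply connected) polygon with d genuine sides, anticlockwise *)
Definition simple_polygon : Prop :=
  (3 <= d)%nat /\
  (forall i, (i < d)%nat -> vtx i <> vtx (S i)) /\
  (forall i, (i < d)%nat -> cross (sdir i) (sdir (S i)) <> 0) /\
  (forall i j t t', (i < d)%nat -> (j < d)%nat -> i <> j ->
      0 <= t <= 1 -> 0 <= t' <= 1 -> seg_pt i t = seg_pt j t' ->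
      (S i mod d = j /\ t = 1 /\ t' = 0) \/ (S j mod d = i /\ t = 0 /\ t' = 1)) /\
  0 < rsum (fun i => cross (vtx i) (vtx (S i))) d.

Definition dirv (i : nat) (theta : R) : pt := rotate theta (inn i).

Definition reflect (j : nat) (u : pt) : pt :=
  psub u (pscale (2 * dot u (inn j)) (inn j)).

(* Phi p q :  Phi(p) = q, for the billiard map Phi in coordinates (s, theta) *)
Definition Phi (p q : pt) : Prop :=
  let (s, th) := p in let (s', th') := q in
  exists i j, on_side_int s i /\ on_side_int s' j /\
    - (PI / 2) < th < PI / 2 /\ - (PI / 2) < th' < PI / 2 /\
    exists t, 0 < t /\
      padd (xline i s) (pscale t (dirv i th)) = xline j s' /\
      (forall t', 0 < t' < t -> ~ on_boundary (padd (xline i s) (pscale t' (dirv i th)))) /\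
      dirv j th' = reflect j (dirv i th).

Definition beta (i j : nat) : R := PI - oriented_angle (tang j) (tang i).

(* first component of Phi_{i,j}: parameter s' of the intersection x_j(s') of l_j with
   the line through x_i(s) of direction dirv i theta *)
Definition Phiij_s (i j : nat) (s theta : R) : R :=
  let u := dirv i theta in
  arc j + cross (psub (xline i s) (vtx j)) u / cross (tang j) u.

Variables (n : nat) (itin : nat -> nat) (thh : nat -> R).
Definition it (k : nat) : nat := itin (k mod (2 * n)).

Definition cyl_orbit (p : pt) : Prop :=
  exists q : nat -> pt, q O = p /\ q (2 * n)%nat = p /\
    (forall k, (k < 2 * n)%nat -> Phi (q k) (q (S k))) /\
    (forall k, (0 < k < 2 * n)%nat -> q k <> p) /\
    (forall k, (k < 2 * n)%nat -> on_side_int (fst (q k)) (itin k) /\ snd (q k) = thh k).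

Definition periodic_cylinder (C : pt -> Prop) : Prop :=
  (exists p, C p) /\ (forall p, C p <-> cyl_orbit p).

Definition betak (k : nat) : R := beta (it k) (it (S k)).

Definition theta_hat0_formula : R :=
  / INR (2 * n) * rsum (fun k => (-1) ^ (S k) * INR k * betak k) (2 * n).

(* theta_0(lambda), with its analytic extension at lambda = 1 *)
Definition theta0 (lam : R) : R :=
  if Req_dec_T lam 1 then theta_hat0_formula
  else / (lam ^ (2 * n) - 1) * rsum (fun k => (- lam) ^ (2 * n - k) * betak k) (2 * n).

Fixpoint thetak (lam : R) (k : nat) : R :=
  match k with
  | O => theta0 lam
  | S k' => lam * (betak k' - thetak lam k')
  end.

(* (R_lam o Phi_{i_{k-1},i_k} o ... o R_lam o Phi_{i_0,i_1}) (s, theta_0(lam)) *)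
Fixpoint Fstate (k : nat) (s lam : R) : pt :=
  match k with
  | O => (s, theta0 lam)
  | S k' => let p := Fstate k' s lam in
      (Phiij_s (it k') (it (S k')) (fst p) (snd p), lam * (betak k' - snd p))
  end.

Definition F (k : nat) (s lam : R) : R := fst (Fstate k s lam).

End Polygon.

Definition analytic_on (f : R -> R) (a b : R) : Prop :=
  forall x0, a < x0 < b -> exists r, 0 < r /\ exists c : nat -> R,
    forall x, Rabs (x - x0) < r ->
      Un_cv (fun N => sum_f_R0 (fun m => c m * (x - x0) ^ m) N) (f x).

(* Main.v *)
Require Import Defs.
From Coquelicot Require Import Coquelicot.
From Stdlib Require Import Reals Lra Lia Classical.
Open Scope R_scope.

Lemma ser_cv (a : nat -> R) (l : R) : is_series a l <-> Un_cv (fun N => sum_f_R0 a N) l.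
Proof. rewrite is_series_Reals. reflexivity. Qed.

Lemma ser_unique (a : nat -> R) (l1 l2 : R) : is_series a l1 -> is_series a l2 -> l1 = l2.
Proof. intros H1 H2. apply is_series_unique in H1. apply is_series_unique in H2. congruence. Qed.

Lemma ser_cmp (v w : nat -> R) (V W : R) : is_series v V -> is_series w W -> (forall n, Rabs (v n) <= w n) -> Rabs V <= W.
Proof.
  intros Hv Hw H. apply ser_cv in Hv. apply ser_cv in Hw.
  apply Rle_cv_lim with (Un := fun N => Rabs (sum_f_R0 v N)) (Vn := fun N => sum_f_R0 w N).
  - intro N. eapply Rle_trans. apply sum_f_R0_triangle. apply sum_Rle. intros; auto.
  - now apply cv_cvabs.
  - exact Hw.
Qed.

Lemma ser_partial_le (a : nat -> R) (l : R) N : (forall n, 0 <= a n) -> is_series a l -> sum_f_R0 a N <= l.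
Proof.
  intros Hp H. apply ser_cv in H. apply growing_ineq; auto.
  intro n. simpl. specialize (Hp (S n)). lra.
Qed.

Lemma ser_term_le (a : nat -> R) (l : R) N : (forall n, 0 <= a n) -> is_series a l -> a N <= l.
Proof.
  intros Hp H. eapply Rle_trans; [|apply (ser_partial_le a l N Hp H)].
  destruct N; simpl. lra. assert (0 <= sum_f_R0 a N). { apply cond_pos_sum. auto. } lra.
Qed.

Lemma ser_ex_abs_le (a b : nat -> R) : (forall n, Rabs (a n) <= b n) -> ex_series b -> ex_series a.
Proof. intros H Hb. apply (ex_series_le a b); auto. Qed.

Lemma ser_nonneg (a : nat -> R) (l : R) : (forall n, 0 <= a n) -> is_series a l -> 0 <= l.
Proof. intros Hp H. eapply Rle_trans; [|apply (ser_partial_le a l 0 Hp H)]. simpl. auto. Qed.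

Lemma ser_le (a b : nat -> R) (la lb : R) : (forall n, a n <= b n) -> is_series a la -> is_series b lb -> la <= lb.
Proof. intros H Ha Hb. apply ser_cv in Ha. apply ser_cv in Hb.
  eapply Rle_cv_lim; [|exact Ha|exact Hb]. intro; apply sum_Rle; auto. Qed.

Lemma ser_ext (a b : nat -> R) (l : R) : (forall n, a n = b n) -> is_series a l -> is_series b l.
Proof. intros H Ha. eapply is_series_ext; eauto. Qed.

Lemma ser_plus (a b : nat -> R) (la lb : R) : is_series a la -> is_series b lb -> is_series (fun n => a n + b n) (la + lb).
Proof. intros. apply (is_series_plus a b la lb); auto. Qed.

Lemma ser_scal (c : R) (a : nat -> R) (l : R) : is_series a l -> is_series (fun n => c * a n) (c * l).
Proof. intros H. apply (is_series_scal_l c a l H). Qed.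

Lemma ser_zero : is_series (fun _ => 0) 0.
Proof. apply ser_cv. intros e He. exists 0%nat. intros n _. 
  replace (sum_f_R0 (fun _ => 0) n) with 0. unfold Rdist. rewrite Rminus_0_r, Rabs_R0. lra.
  induction n; simpl; lra. Qed.

Lemma sum_trunc (u : nat -> R) N n : (n >= N)%nat ->
  sum_f_R0 (fun j => if Compare_dec.le_dec j N then u j else 0) n = sum_f_R0 u N.
Proof.
  intros Hn. induction Hn.
  - apply sum_eq. intros i Hi. destruct (Compare_dec.le_dec i N); auto; lia.
  - simpl. rewrite IHHn. destruct (Compare_dec.le_dec (S m) N); [lia|lra].
Qed.

Lemma ser_trunc (u : nat -> R) N : is_series (fun j => if Compare_dec.le_dec j N then u j else 0) (sum_f_R0 u N).
Proof. apply ser_cv. intros e He. exists N. intros n Hn. rewrite sum_trunc; auto.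
  unfold Rdist. rewrite Rminus_diag, Rabs_R0. lra. Qed.

Lemma ser_at0 (c : nat -> R) (l : R) : is_series (fun n => c n * 0 ^ n) l -> l = c O.
Proof. intros H. eapply ser_unique; [exact H|]. 
  apply (ser_ext (fun j => if Compare_dec.le_dec j 0 then c O else 0)).
  - intros [|j]; simpl. ring. destruct (Compare_dec.le_dec (S j) 0); [lia|ring].
  - apply (ser_trunc (fun _ => c O) 0).
Qed.

Lemma ser_mult (a b : nat -> R) (y la lb : R) :
  ex_series (fun n => Rabs (a n * y ^ n)) -> ex_series (fun n => Rabs (b n * y ^ n)) ->
  is_series (fun n => a n * y ^ n) la -> is_series (fun n => b n * y ^ n) lb ->
  is_series (fun n => PS_mult a b n * y ^ n) (la * lb).
Proof.
  intros Ea Eb Ha Hb. 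
  pose proof (is_series_mult _ _ la lb Ha Hb Ea Eb) as H.
  eapply ser_ext; [|exact H]. intro n. simpl. unfold PS_mult.
  rewrite Rmult_comm, scal_sum. apply sum_eq. intros i Hi.
  replace (y ^ n) with (y ^ i * y ^ (n - i)). ring. rewrite <- pow_add. f_equal. lia.
Qed.
Definition ana (f : R -> R) (x0 : R) : Prop :=
  exists (c : nat -> R) (r : R), 0 < r /\ ex_series (fun n => Rabs (c n) * r ^ n) /\
    forall y, Rabs y <= r -> is_series (fun n => c n * y ^ n) (f (x0 + y)).

Lemma abs_term_le (c : nat -> R) r y n : Rabs y <= r -> Rabs (c n * y ^ n) <= Rabs (c n) * r ^ n.
Proof. intros H. rewrite Rabs_mult, <- RPow_abs. apply Rmult_le_compat_l. apply Rabs_pos.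
  apply pow_incr. split; auto. apply Rabs_pos. Qed.

Lemma abs_conv (c : nat -> R) r y : ex_series (fun n => Rabs (c n) * r ^ n) -> Rabs y <= r ->
  ex_series (fun n => Rabs (c n * y ^ n)).
Proof. intros E H. apply (ser_ex_abs_le _ (fun n => Rabs (c n) * r ^ n)); [|exact E]. intro n. rewrite Rabs_Rabsolu.
  now apply abs_term_le. Qed.

Lemma abs_conv' (c : nat -> R) r r' : ex_series (fun n => Rabs (c n) * r ^ n) -> 0 <= r' <= r ->
  ex_series (fun n => Rabs (c n) * r' ^ n).
Proof. intros E H. apply (ser_ex_abs_le _ (fun n => Rabs (c n) * r ^ n)); [|exact E]. intro n.
  rewrite Rabs_mult, Rabs_Rabsolu, <- RPow_abs. apply Rmult_le_compat_l. apply Rabs_pos.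
  apply pow_incr. split. apply Rabs_pos. rewrite Rabs_pos_eq; lra. Qed.

Lemma ana_ext f g x0 : ana f x0 -> (exists e, 0 < e /\ forall x, Rabs (x - x0) < e -> f x = g x) -> ana g x0.
Proof.
  intros [c [r [Hr [E H]]]] [e [He Hfg]]. exists c, (Rmin r (e/2)). split; [|split].
  - apply Rmin_glb_lt; lra.
  - apply (abs_conv' c r); auto. split. apply Rmin_glb; lra. apply Rmin_l.
  - intros y Hy. rewrite <- Hfg. apply H. eapply Rle_trans; [exact Hy|apply Rmin_l].
    replace (x0 + y - x0) with y by ring. eapply Rle_lt_trans; [exact Hy|]. 
    eapply Rle_lt_trans; [apply Rmin_r|lra].
Qed.

Lemma ana_eq f g x0 : ana f x0 -> (forall x, f x = g x) -> ana g x0.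
Proof. intros H E. apply (ana_ext f); auto. exists 1. split. lra. auto. Qed.

Definition fin2 (u v : R) (n : nat) : R := match n with O => u | 1%nat => v | _ => 0 end.

Lemma fin2_series u v y : is_series (fun n => fin2 u v n * y ^ n) (u + v * y).
Proof.
  replace (u + v * y) with (sum_f_R0 (fun n => fin2 u v n * y ^ n) 1) by (simpl; ring).
  apply (ser_ext (fun j => if Compare_dec.le_dec j 1 then fin2 u v j * y ^ j else 0)); [|apply ser_trunc].
  intros [|[|j]]; simpl; auto. destruct (Compare_dec.le_dec (S (S j)) 1). lia. ring.
Qed.

Lemma fin2_abs u v r : ex_series (fun n => Rabs (fin2 u v n) * r ^ n).
Proof. eexists. apply (ser_ext (fun n => fin2 (Rabs u) (Rabs v * r) n * 1 ^ n)).
  intros [|[|j]]; simpl; try ring. rewrite Rabs_R0; ring. apply fin2_series. Qed.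

Lemma ana_const k x0 : ana (fun _ => k) x0.
Proof. exists (fin2 k 0), 1. split. lra. split. apply fin2_abs.
  intros y _. assert (E := fin2_series k 0 y). replace (k + 0 * y) with k in E by ring. exact E. Qed.

Lemma ana_id x0 : ana (fun x => x) x0.
Proof. exists (fin2 x0 1), 1. split. lra. split. apply fin2_abs.
  intros y _. replace (x0 + y) with (x0 + 1 * y) by ring. apply fin2_series. Qed.

Lemma ana_plus f g x0 : ana f x0 -> ana g x0 -> ana (fun x => f x + g x) x0.
Proof.
  intros [a [ra [Ha [Ea Ha']]]] [b [rb [Hb [Eb Hb']]]].
  exists (fun n => a n + b n), (Rmin ra rb). split; [|split].
  - apply Rmin_glb_lt; lra.
  - apply (ser_ex_abs_le _ (fun n => Rabs (a n) * Rmin ra rb ^ n + Rabs (b n) * Rmin ra rb ^ n)).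
    + intro n. assert (0 <= Rmin ra rb ^ n) by (apply pow_le; apply Rmin_glb; lra).
      rewrite Rabs_pos_eq. rewrite <- Rmult_plus_distr_r.
      apply Rmult_le_compat_r. auto. apply Rabs_triang.
      apply Rmult_le_pos. apply Rabs_pos. auto.
    + destruct (abs_conv' a ra (Rmin ra rb) Ea) as [la Hla]. split. apply Rmin_glb; lra. apply Rmin_l.
      destruct (abs_conv' b rb (Rmin ra rb) Eb) as [lb Hlb]. split. apply Rmin_glb; lra. apply Rmin_r.
      eexists. apply ser_plus; eauto.
  - intros y Hy. apply (ser_ext (fun n => a n * y ^ n + b n * y ^ n)). intro; ring.
    apply ser_plus. apply Ha'. eapply Rle_trans; [exact Hy|apply Rmin_l].
    apply Hb'. eapply Rle_trans; [exact Hy|apply Rmin_r].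
Qed.

Lemma PS_mult_abs (a b : nat -> R) n : Rabs (PS_mult a b n) <= PS_mult (fun k => Rabs (a k)) (fun k => Rabs (b k)) n.
Proof. unfold PS_mult. eapply Rle_trans. apply sum_f_R0_triangle. apply sum_Rle. intros. rewrite Rabs_mult. lra. Qed.

Lemma PS_mult_nonneg (a b : nat -> R) n : (forall k, 0 <= a k) -> (forall k, 0 <= b k) -> 0 <= PS_mult a b n.
Proof. intros. unfold PS_mult. apply cond_pos_sum. intros. apply Rmult_le_pos; auto. Qed.

Lemma mult_abs_conv (a b : nat -> R) y :
  ex_series (fun n => Rabs (a n * y ^ n)) -> ex_series (fun n => Rabs (b n * y ^ n)) ->
  ex_series (fun n => Rabs (PS_mult a b n * y ^ n)).
Proof.
  intros [la Ha] [lb Hb].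
  assert (H : is_series (fun n => PS_mult (fun k => Rabs (a k)) (fun k => Rabs (b k)) n * Rabs y ^ n) (la * lb)).
  { apply ser_mult.
    - eexists. apply (ser_ext (fun n => Rabs (a n * y ^ n))); [|exact Ha]. intro n.
      repeat rewrite Rabs_mult; repeat rewrite <- RPow_abs; repeat rewrite Rabs_Rabsolu; reflexivity.
    - eexists. apply (ser_ext (fun n => Rabs (b n * y ^ n))); [|exact Hb]. intro n.
      repeat rewrite Rabs_mult; repeat rewrite <- RPow_abs; repeat rewrite Rabs_Rabsolu; reflexivity.
    - apply (ser_ext (fun n => Rabs (a n * y ^ n))); [|exact Ha]. intro n. rewrite Rabs_mult, <- RPow_abs. auto.
    - apply (ser_ext (fun n => Rabs (b n * y ^ n))); [|exact Hb]. intro n. rewrite Rabs_mult, <- RPow_abs. auto. }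
  apply (ser_ex_abs_le _ (fun n => PS_mult (fun k => Rabs (a k)) (fun k => Rabs (b k)) n * Rabs y ^ n)); [|eexists; exact H]. intro n. rewrite Rabs_Rabsolu, Rabs_mult, <- RPow_abs.
  apply Rmult_le_compat_r. apply pow_le, Rabs_pos. apply PS_mult_abs.
Qed.

Lemma ana_mult f g x0 : ana f x0 -> ana g x0 -> ana (fun x => f x * g x) x0.
Proof.
  intros [a [ra [Ha [Ea Ha']]]] [b [rb [Hb [Eb Hb']]]].
  set (r := Rmin ra rb). assert (Hr : 0 < r) by (apply Rmin_glb_lt; lra).
  assert (Ea' := abs_conv' a ra r Ea (conj (Rlt_le _ _ Hr) (Rmin_l _ _))).
  assert (Eb' := abs_conv' b rb r Eb (conj (Rlt_le _ _ Hr) (Rmin_r _ _))).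
  exists (PS_mult a b), r. split; [|split]; auto.
  - apply (ser_ex_abs_le _ (fun n => Rabs (PS_mult a b n * r ^ n))).
    + intro n. rewrite !Rabs_mult, Rabs_Rabsolu. lra.
    + apply mult_abs_conv; apply abs_conv with (r := r); auto; rewrite Rabs_pos_eq; lra.
  - intros y Hy. apply ser_mult. apply abs_conv with r; auto. apply abs_conv with r; auto.
    apply Ha'. eapply Rle_trans; [exact Hy|apply Rmin_l].
    apply Hb'. eapply Rle_trans; [exact Hy|apply Rmin_r].
Qed.

Lemma ana_opp f x0 : ana f x0 -> ana (fun x => - f x) x0.
Proof. intros H. apply (ana_eq (fun x => (-1) * f x)). apply ana_mult; auto. apply ana_const. intro; ring. Qed.

Lemma ana_minus f g x0 : ana f x0 -> ana g x0 -> ana (fun x => f x - g x) x0.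
Proof. intros. apply (ana_eq (fun x => f x + - g x)). apply ana_plus; auto. apply ana_opp; auto. intro; ring. Qed.

Lemma ana_at (f : R -> R) x0 : ana f x0 -> exists c, f x0 = c O /\ ana f x0.
Proof. intros H. destruct H as [c [r [Hr [E H]]]]. exists c. split.
  apply ser_at0. replace x0 with (x0 + 0) at 1 by ring. apply H. rewrite Rabs_R0; lra.
  exists c, r; auto. Qed.

Fixpoint pw (b : nat -> R) (m : nat) : nat -> R :=
  match m with O => fun j => match j with O => 1 | _ => 0 end
  | S m' => PS_mult b (pw b m') end.

Lemma pw_zero b : b O = 0 -> forall m j, (j < m)%nat -> pw b m j = 0.
Proof.
  intros Hb0 m. induction m as [|m IH]; intros j Hj. lia.
  simpl. unfold PS_mult.
  transitivity (sum_f_R0 (fun _ => 0) j).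
  apply sum_eq. intros i Hi. destruct i. rewrite Hb0; ring. rewrite IH by lia. ring.
  rewrite sum_cte. ring.
Qed.

Lemma pw_nonneg b : (forall k, 0 <= b k) -> forall m j, 0 <= pw b m j.
Proof. intros Hb m; induction m; intros j; simpl. destruct j; lra. apply PS_mult_nonneg; auto. Qed.

Lemma pw_abs b m j : Rabs (pw b m j) <= pw (fun k => Rabs (b k)) m j.
Proof. revert j; induction m; intros j; simpl. destruct j; rewrite ?Rabs_R1, ?Rabs_R0; lra.
  unfold PS_mult. eapply Rle_trans. apply sum_f_R0_triangle. apply sum_Rle. intros i _.
  rewrite Rabs_mult. apply Rmult_le_compat_l. apply Rabs_pos. apply IHm. Qed.

Lemma pw_series b y v : ex_series (fun n => Rabs (b n * y ^ n)) -> is_series (fun n => b n * y ^ n) v ->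
  forall m, is_series (fun n => pw b m n * y ^ n) (v ^ m) /\ ex_series (fun n => Rabs (pw b m n * y ^ n)).
Proof. intros E H m. induction m as [|m [IH1 IH2]].
  - split.
    + apply (ser_ext (fun n => fin2 1 0 n * y ^ n)). intros [|[|j]]; reflexivity.
      assert (E2 := fin2_series 1 0 y). replace (1 + 0 * y) with 1 in E2 by ring. exact E2.
    + apply (ser_ex_abs_le _ (fun n => Rabs (fin2 1 0 n) * 1 ^ n)); [|apply fin2_abs].
      intros [|[|j]]; simpl; rewrite ?Rabs_R0, ?Rabs_R1, ?Rmult_0_l, ?Rabs_R0, ?Rmult_1_l, ?Rabs_R1; lra.
  - split. simpl. apply ser_mult; auto. apply mult_abs_conv; auto.
Qed.

Lemma rsum_series (u : nat -> nat -> R) (U : nat -> R) N : (forall m, is_series (u m) (U m)) ->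
  is_series (fun j => rsum (fun m => u m j) N) (rsum U N).
Proof. intros H. induction N; simpl. apply ser_zero. apply ser_plus; auto. Qed.

Lemma rsum_ext f g N : (forall m, f m = g m) -> rsum f N = rsum g N.
Proof. intros H; induction N; simpl; auto. rewrite IHN, H; auto. Qed.

Lemma rsum_sum f N : rsum f (S N) = sum_f_R0 f N.
Proof. induction N. simpl; ring. simpl in *. rewrite IHN. ring. Qed.

Lemma rsum_le f g N : (forall m, f m <= g m) -> rsum f N <= rsum g N.
Proof. intros H; induction N; simpl. lra. specialize (H N). lra. Qed.

Lemma rsum_abs f N : Rabs (rsum f N) <= rsum (fun m => Rabs (f m)) N.
Proof. induction N; simpl. rewrite Rabs_R0; lra. eapply Rle_trans. apply Rabs_triang. lra. Qed.

Lemma rsum_mult_r f c N : rsum f N * c = rsum (fun m => f m * c) N.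
Proof. induction N; simpl. ring. rewrite <- IHN. ring. Qed.

Lemma rsum_nonneg f N : (forall m, 0 <= f m) -> 0 <= rsum f N.
Proof. intros H; induction N; simpl. lra. specialize (H N). lra. Qed.

Lemma pow_le_1 q n : 0 <= q <= 1 -> q ^ n <= 1.
Proof. intros H. rewrite <- (pow1 n). apply pow_incr. auto. Qed.

Lemma ana_comp (F : R -> R) (a : nat -> R) (R0 : R) (h : R -> R) x0 :
  0 < R0 -> ex_series (fun m => Rabs (a m) * R0 ^ m) ->
  (forall z, Rabs z <= R0 -> is_series (fun m => a m * z ^ m) (F z)) ->
  ana h x0 -> h x0 = 0 -> ana (fun x => F (h x)) x0.
Proof.
  intros HR0 [K HK] HF [b [rb [Hrb [[Kb HKb] Hb]]]] Hh0.
  assert (b0 : b O = 0).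
  { rewrite <- Hh0. symmetry. replace x0 with (x0 + 0) by ring. apply ser_at0. apply Hb. rewrite Rabs_R0; lra. }
  assert (Kb0 : 0 <= Kb) by (eapply ser_nonneg; [|exact HKb]; intro; apply Rmult_le_pos; [apply Rabs_pos|apply pow_le; lra]).
  assert (K0 : 0 <= K) by (eapply ser_nonneg; [|exact HK]; intro; apply Rmult_le_pos; [apply Rabs_pos|apply pow_le; lra]).
  set (q := Rmin 1 (R0 / (Kb + 1))).
  assert (Hq : 0 < q) by (apply Rmin_glb_lt; [lra|apply Rdiv_lt_0_compat; lra]).
  assert (Hq1 : q <= 1) by apply Rmin_l.
  assert (Hq2 : q <= R0 / (Kb + 1)) by apply Rmin_r.
  set (r := rb * q).
  assert (Hr : 0 < r) by (apply Rmult_lt_0_compat; lra).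
  assert (Hrrb : r <= rb) by (unfold r; nra).
  assert (Eabr : ex_series (fun n => Rabs (b n) * r ^ n)) by (apply abs_conv' with rb; [eexists; exact HKb|lra]).
  destruct Eabr as [Hr_ HHr].
  assert (Hr0 : 0 <= Hr_) by (eapply ser_nonneg; [|exact HHr]; intro; apply Rmult_le_pos; [apply Rabs_pos|apply pow_le; lra]).
  assert (HrR0 : Hr_ <= R0).
  { assert (Hle : Hr_ <= q * Kb).
    { apply (ser_le (fun n => Rabs (b n) * r^n) (fun n => q * (Rabs (b n) * rb ^ n))); auto.
      - intro n. destruct n. simpl. rewrite b0, Rabs_R0. lra.
        unfold r. rewrite Rpow_mult_distr. simpl (q ^ S n).
        assert (q ^ n <= 1) by (apply pow_le_1; lra).
        assert (0 <= Rabs (b (S n)) * rb ^ S n) by (apply Rmult_le_pos; [apply Rabs_pos|apply pow_le; lra]).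
        assert (0 <= q ^ n) by (apply pow_le; lra).
        replace (Rabs (b (S n)) * (rb ^ S n * (q * q ^ n))) with ((Rabs (b (S n)) * rb ^ S n) * q * q ^ n) by ring.
        replace (q * (Rabs (b (S n)) * rb ^ S n)) with ((Rabs (b (S n)) * rb ^ S n) * q * 1) by ring.
        apply Rmult_le_compat_l; auto. apply Rmult_le_pos; lra.
      - apply ser_scal; auto. }
    assert (q * Kb <= R0).
    { apply Rle_trans with (R0 / (Kb + 1) * Kb). apply Rmult_le_compat_r; auto.
      apply Rle_trans with (R0 / (Kb + 1) * (Kb + 1)). apply Rmult_le_compat_l. apply Rlt_le, Rdiv_lt_0_compat; lra. lra.
      right. field. lra. }
    lra. }
  assert (Eab_abs : ex_series (fun n => Rabs (Rabs (b n) * r ^ n))).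
  { eexists. apply (ser_ext (fun n => Rabs (b n) * r ^ n)); [|exact HHr]. intro n. symmetry. apply Rabs_pos_eq.
    apply Rmult_le_pos; [apply Rabs_pos|apply pow_le; lra]. }
  assert (HPr := pw_series (fun k => Rabs (b k)) r Hr_ Eab_abs HHr).
  assert (HPterm : forall m j, pw (fun k => Rabs (b k)) m j * r ^ j <= Hr_ ^ m).
  { intros m j. apply (ser_term_le (fun n => pw (fun k => Rabs (b k)) m n * r ^ n)).
    intro n. apply Rmult_le_pos. apply pw_nonneg. intro; apply Rabs_pos. apply pow_le; lra.
    apply HPr. }
  assert (HpartK : forall N, rsum (fun m => Rabs (a m) * Hr_ ^ m) N <= K).
  { intros N. apply Rle_trans with (rsum (fun m => Rabs (a m) * R0 ^ m) N).
    apply rsum_le. intro m. apply Rmult_le_compat_l. apply Rabs_pos. apply pow_incr; lra.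
    destruct N. simpl; lra. rewrite rsum_sum. apply ser_partial_le; auto.
    intro; apply Rmult_le_pos; [apply Rabs_pos|apply pow_le; lra]. }
  set (e := fun N j => rsum (fun m => a m * pw b m j) N).
  set (d := fun j => e (S j) j).
  assert (Hed : forall N j, (j <= N)%nat -> e (S N) j = d j).
  { intros N j Hj. unfold d. replace N with (j + (N - j))%nat by lia.
    generalize (N - j)%nat. intro k. induction k. rewrite Nat.add_0_r; auto.
    replace (S (j + S k)) with (S (S (j + k))) by lia. unfold e in *.
    change (rsum (fun m => a m * pw b m j) (S (S (j + k)))) with
      (rsum (fun m => a m * pw b m j) (S (j + k)) + a (S (j + k)) * pw b (S (j + k)) j).
    rewrite (pw_zero b b0 (S (j + k)) j) by lia. rewrite Rmult_0_r, Rplus_0_r.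
    exact IHk. }
  assert (Hdbound : forall j, Rabs (d j) * r ^ j <= K).
  { intro j. unfold d, e. eapply Rle_trans; [|apply (HpartK (S j))].
    eapply Rle_trans. apply Rmult_le_compat_r. apply pow_le; lra. apply rsum_abs.
    rewrite rsum_mult_r. apply rsum_le. intro m. rewrite Rabs_mult, Rmult_assoc.
    apply Rmult_le_compat_l. apply Rabs_pos. eapply Rle_trans; [|apply (HPterm m j)].
    apply Rmult_le_compat_r. apply pow_le; lra. apply pw_abs. }
  exists d, (r / 2). split; [lra|split].
  - apply (ser_ex_abs_le _ (fun j => K * (/2) ^ j)).
    + intro j. rewrite Rabs_pos_eq by (apply Rmult_le_pos; [apply Rabs_pos|apply pow_le; lra]).
      replace (r / 2) with (r * / 2) by lra. rewrite Rpow_mult_distr, <- Rmult_assoc.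
      apply Rmult_le_compat_r. apply pow_le; lra. auto.
    + eexists. apply ser_scal. apply is_series_geom. rewrite Rabs_pos_eq; lra.
  - intros y Hy. cbv beta.
    set (z := h (x0 + y)).
    assert (Hy' : Rabs y <= rb) by lra.
    assert (Hz : is_series (fun n => b n * y ^ n) z) by (apply Hb; auto).
    assert (Ebz : ex_series (fun n => Rabs (b n * y ^ n))) by (apply abs_conv with rb; auto; eexists; exact HKb).
    assert (Hzle : Rabs z <= Hr_).
    { apply (ser_cmp _ _ _ _ Hz HHr). intro n. apply abs_term_le. lra. }
    assert (HFz := HF z ltac:(lra)).
    assert (Hpy := pw_series b y z Ebz Hz).
    assert (HT : forall N, is_series (fun j => e N j * y ^ j) (rsum (fun m => a m * z ^ m) N)).
    { intro N. apply (ser_ext (fun j => rsum (fun m => a m * (pw b m j * y ^ j)) N)).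
      intro j. unfold e. rewrite rsum_mult_r. apply rsum_ext. intro; ring.
      apply rsum_series. intro m. apply ser_scal. apply Hpy. }
    assert (Hbound : forall N, Rabs (rsum (fun m => a m * z ^ m) (S N) - sum_f_R0 (fun j => d j * y ^ j) N) <= (/2) ^ (S N) * K).
    { intro N.
      set (v := fun j => e (S N) j * y ^ j - (if Compare_dec.le_dec j N then e (S N) j * y ^ j else 0)).
      assert (Hv : is_series v (rsum (fun m => a m * z ^ m) (S N) - sum_f_R0 (fun j => d j * y ^ j) N)).
      { replace (sum_f_R0 (fun j => d j * y ^ j) N) with (sum_f_R0 (fun j => e (S N) j * y ^ j) N).
        apply (ser_ext (fun j => e (S N) j * y ^ j + (-1) * (if Compare_dec.le_dec j N then e (S N) j * y ^ j else 0))).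
        intro j; unfold v; ring.
        replace (rsum (fun m : nat => a m * z ^ m) (S N) - sum_f_R0 (fun j : nat => e (S N) j * y ^ j) N) with
          (rsum (fun m : nat => a m * z ^ m) (S N) + (-1) * sum_f_R0 (fun j : nat => e (S N) j * y ^ j) N) by ring.
        apply ser_plus. apply HT. apply ser_scal. apply ser_trunc.
        apply sum_eq. intros j Hj. rewrite Hed; auto. }
      set (w := fun j => (/2) ^ (S N) * rsum (fun m => Rabs (a m) * (pw (fun k => Rabs (b k)) m j * r ^ j)) (S N)).
      assert (Hw : is_series w ((/2) ^ (S N) * rsum (fun m => Rabs (a m) * Hr_ ^ m) (S N))).
      { apply ser_scal. apply rsum_series. intro m. apply ser_scal. apply HPr. }
      assert (Hvw : forall j, Rabs (v j) <= w j).
      { intro j. assert (Hw0 : 0 <= w j).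
        { unfold w. apply Rmult_le_pos. apply pow_le; lra. apply rsum_nonneg. intro m.
          apply Rmult_le_pos. apply Rabs_pos. apply Rmult_le_pos. apply pw_nonneg. intro; apply Rabs_pos. apply pow_le; lra. }
        unfold v. destruct (Compare_dec.le_dec j N).
        - rewrite Rminus_diag, Rabs_R0. auto.
        - rewrite Rminus_0_r. unfold w. rewrite Rabs_mult, <- RPow_abs.
          assert (Hyj : Rabs y ^ j <= (/2) ^ (S N) * r ^ j).
          { apply Rle_trans with ((r * /2) ^ j). apply pow_incr. split. apply Rabs_pos. lra.
            rewrite Rpow_mult_distr, Rmult_comm. apply Rmult_le_compat_r. apply pow_le; lra.
            replace j with (S N + (j - S N))%nat by lia. rewrite pow_add.
            assert ((/2) ^ (j - S N) <= 1) by (apply pow_le_1; lra).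
            assert (0 <= (/2) ^ (S N)) by (apply pow_le; lra). nra. }
          eapply Rle_trans. apply Rmult_le_compat_r. apply pow_le, Rabs_pos. unfold e. apply rsum_abs.
          eapply Rle_trans. apply Rmult_le_compat_l. apply rsum_nonneg. intro; apply Rabs_pos. exact Hyj.
          match goal with |- rsum ?f ?M * (?A * ?B) <= _ => replace (rsum f M * (A * B)) with (A * (rsum f M * B)) by ring end.
          rewrite rsum_mult_r. apply Rmult_le_compat_l. apply pow_le; lra.
          apply rsum_le. intro m. rewrite Rabs_mult, Rmult_assoc. apply Rmult_le_compat_l. apply Rabs_pos.
          apply Rmult_le_compat_r. apply pow_le; lra. apply pw_abs. }
      eapply Rle_trans. apply (ser_cmp _ _ _ _ Hv Hw Hvw).
      apply Rmult_le_compat_l. apply pow_le; lra. apply HpartK. }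
    apply ser_cv. intros eps Heps.
    apply ser_cv in HFz. destruct (HFz (eps / 2) ltac:(lra)) as [N1 HN1].
    destruct (pow_lt_1_zero (/2) ltac:(rewrite Rabs_pos_eq; lra) (eps / (2 * (K + 1))) ltac:(apply Rdiv_lt_0_compat; lra)) as [N2 HN2].
    exists (max N1 N2). intros n Hn. unfold Rdist.
    specialize (HN1 n ltac:(lia)). specialize (HN2 (S n) ltac:(lia)). specialize (Hbound n).
    rewrite rsum_sum in Hbound. unfold Rdist in HN1.
    rewrite Rabs_pos_eq in HN2 by (apply pow_le; lra).
    assert ((/ 2) ^ S n * K <= eps / (2 * (K + 1)) * K) by (apply Rmult_le_compat_r; lra).
    assert (eps / (2 * (K + 1)) * K < eps / 2).
    { unfold Rdiv. rewrite Rinv_mult. 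
      assert (0 < / (K + 1)) by (apply Rinv_0_lt_compat; lra).
      assert (/ (K+1) * K < 1). { apply Rmult_lt_reg_l with (K + 1). lra. field_simplify; lra. }
      assert (0 < eps * / 2) by lra. nra. }
    set (T := sum_f_R0 (fun m => a m * z ^ m) n) in *.
    set (D := sum_f_R0 (fun j => d j * y ^ j) n) in *.
    replace (D - F z) with ((T - F z) - (T - D)) by ring.
    eapply Rle_lt_trans. apply Rabs_triang. rewrite Rabs_Ropp. lra.
Qed.

Definition ca (n : nat) : R := if Nat.even n then cos_n (Nat.div2 n) else 0.
Definition sa (n : nat) : R := if Nat.even n then 0 else sin_n (Nat.div2 n).

Lemma cos_ser z : is_series (fun n => ca n * z ^ n) (cos z).
Proof.
  unfold cos. destruct (exist_cos (Rsqr z)) as [l Hl].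
  apply is_pseries_R. replace l with (l + z * 0) by ring. apply is_pseries_odd_even.
  - apply is_pseries_R. apply (ser_ext (fun i => cos_n i * (Rsqr z) ^ i)).
    intro n. unfold ca. rewrite Nat.even_even, Nat.div2_double. unfold Rsqr. f_equal. f_equal. ring.
    apply is_series_Reals. exact Hl.
  - apply is_pseries_R. apply (ser_ext (fun _ => 0)). intro n. unfold ca. rewrite Nat.even_odd. ring.
    apply ser_zero.
Qed.

Lemma sin_ser z : is_series (fun n => sa n * z ^ n) (sin z).
Proof.
  unfold sin. destruct (exist_sin (Rsqr z)) as [l Hl].
  apply is_pseries_R. replace (z * l) with (0 + z * l) by ring. apply is_pseries_odd_even.
  - apply is_pseries_R. apply (ser_ext (fun _ => 0)). intro n. unfold sa. rewrite Nat.even_even. ring.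
    apply ser_zero.
  - apply is_pseries_R. apply (ser_ext (fun i => sin_n i * (Rsqr z) ^ i)).
    intro n. unfold sa. rewrite Nat.even_odd, Nat.div2_odd'. unfold Rsqr. f_equal. f_equal. ring.
    apply is_series_Reals. exact Hl.
Qed.

Lemma fact_inv_series : ex_series (fun n => / INR (Factorial.fact n)).
Proof. eexists. apply (ser_ext (fun n => / INR (Factorial.fact n) * 1 ^ n)). intro; rewrite pow1; ring.
  apply is_pseries_R. apply is_exp_Reals. Qed.

Lemma inv_fact_pos n : 0 < / INR (Factorial.fact n).
Proof. apply Rinv_0_lt_compat. apply INR_fact_lt_0. Qed.

Lemma ca_abs n : Rabs (ca n) * 1 ^ n <= / INR (Factorial.fact n).
Proof. rewrite pow1, Rmult_1_r. unfold ca. destruct (Nat.even n) eqn:E.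
  - unfold cos_n. assert (Hn : (2 * Nat.div2 n)%nat = n).
    { rewrite (Nat.div2_odd n) at 2. rewrite <- Nat.negb_even, E. simpl. lia. }
    rewrite Hn. unfold Rdiv. rewrite Rabs_mult, pow_1_abs, Rabs_pos_eq. lra. left; apply inv_fact_pos.
  - rewrite Rabs_R0. left; apply inv_fact_pos.
Qed.

Lemma sa_abs n : Rabs (sa n) * 1 ^ n <= / INR (Factorial.fact n).
Proof. rewrite pow1, Rmult_1_r. unfold sa. destruct (Nat.even n) eqn:E.
  - rewrite Rabs_R0. left; apply inv_fact_pos.
  - unfold sin_n. assert (Hn : (2 * Nat.div2 n + 1)%nat = n).
    { rewrite (Nat.div2_odd n) at 2. rewrite <- Nat.negb_even, E. simpl. lia. }
    rewrite Hn. unfold Rdiv. rewrite Rabs_mult, pow_1_abs, Rabs_pos_eq. lra. left; apply inv_fact_pos.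
Qed.

Lemma ana_cos0 h x0 : ana h x0 -> h x0 = 0 -> ana (fun x => cos (h x)) x0.
Proof. intros. apply (ana_comp cos ca 1); auto. lra.
  apply (ser_ex_abs_le _ (fun n => / INR (Factorial.fact n))). intro n. rewrite Rabs_pos_eq. apply ca_abs.
  apply Rmult_le_pos. apply Rabs_pos. rewrite pow1; lra. apply fact_inv_series.
  intros; apply cos_ser. Qed.

Lemma ana_sin0 h x0 : ana h x0 -> h x0 = 0 -> ana (fun x => sin (h x)) x0.
Proof. intros. apply (ana_comp sin sa 1); auto. lra.
  apply (ser_ex_abs_le _ (fun n => / INR (Factorial.fact n))). intro n. rewrite Rabs_pos_eq. apply sa_abs.
  apply Rmult_le_pos. apply Rabs_pos. rewrite pow1; lra. apply fact_inv_series.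
  intros; apply sin_ser. Qed.

Lemma ana_cos g x0 : ana g x0 -> ana (fun x => cos (g x)) x0.
Proof. intros H. set (g0 := g x0).
  assert (Hh : ana (fun x => g x - g0) x0) by (apply ana_minus; auto; apply ana_const).
  assert (Hh0 : g x0 - g0 = 0) by (unfold g0; ring).
  apply (ana_eq (fun x => cos g0 * cos (g x - g0) - sin g0 * sin (g x - g0))).
  apply ana_minus; apply ana_mult; try apply ana_const. apply (ana_cos0 (fun x => g x - g0)); auto.
  apply (ana_sin0 (fun x => g x - g0)); auto.
  intro x. rewrite <- cos_plus. f_equal. ring. Qed.

Lemma ana_sin g x0 : ana g x0 -> ana (fun x => sin (g x)) x0.
Proof. intros H. set (g0 := g x0).
  assert (Hh : ana (fun x => g x - g0) x0) by (apply ana_minus; auto; apply ana_const).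
  assert (Hh0 : g x0 - g0 = 0) by (unfold g0; ring).
  apply (ana_eq (fun x => sin g0 * cos (g x - g0) + cos g0 * sin (g x - g0))).
  apply ana_plus; apply ana_mult; try apply ana_const. apply (ana_cos0 (fun x => g x - g0)); auto.
  apply (ana_sin0 (fun x => g x - g0)); auto.
  intro x. rewrite <- sin_plus. f_equal. ring. Qed.

Lemma ana_inv g x0 : ana g x0 -> g x0 <> 0 -> ana (fun x => / g x) x0.
Proof. intros H Hg. set (g0 := g x0).
  assert (Hu : ana (fun x => 1 - g x * / g0) x0) by (apply ana_minus; [apply ana_const|apply ana_mult; auto; apply ana_const]).
  assert (Hu0 : 1 - g x0 * / g0 = 0) by (unfold g0; field; auto).
  assert (Hc : ana (fun x => / (1 - (1 - g x * / g0))) x0).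
  { apply (ana_comp (fun z => / (1 - z)) (fun _ => 1) (/2) (fun x => 1 - g x * / g0)); auto.
    - lra.
    - eexists. apply (ser_ext (fun n => (/2) ^ n)). intro; rewrite Rabs_R1; ring.
      apply is_series_geom. rewrite Rabs_pos_eq; lra.
    - intros z Hz. apply (ser_ext (fun n => z ^ n)). intro; ring. apply is_series_geom. lra. }
  apply (ana_eq (fun x => / g0 * / (1 - (1 - g x * / g0)))).
  apply ana_mult; auto. apply ana_const.
  intro x. replace (1 - (1 - g x * / g0)) with (g x * / g0) by ring.
  rewrite Rinv_mult, Rinv_inv. rewrite (Rmult_comm (/ g x)), <- Rmult_assoc, Rinv_l; auto. ring. Qed.

Lemma ana_div f g x0 : ana f x0 -> ana g x0 -> g x0 <> 0 -> ana (fun x => f x / g x) x0.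
Proof. intros. unfold Rdiv. apply ana_mult; auto. apply ana_inv; auto. Qed.

Lemma ana_analytic f a b : (forall x0, a < x0 < b -> ana f x0) -> analytic_on f a b.
Proof. intros H x0 Hx0. destruct (H x0 Hx0) as [c [r [Hr [E Hs]]]]. exists r. split; auto.
  exists c. intros x Hx. specialize (Hs (x - x0) ltac:(lra)). replace (x0 + (x - x0)) with x in Hs by ring.
  apply ser_cv in Hs. exact Hs. Qed.

Lemma vtx_mod d V i : (0 < d)%nat -> vtx d V (i mod d) = vtx d V i /\ vtx d V (S (i mod d)) = vtx d V (S i).
Proof. intros Hd. unfold vtx. split. rewrite Nat.Div0.mod_mod; auto.
  f_equal. replace (S (i mod d)) with (i mod d + 1)%nat by lia. replace (S i) with (i + 1)%nat by lia.
  apply Nat.Div0.add_mod_idemp_l. Qed.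

Lemma sdir_pos d V i : simple_polygon d V ->
  0 < fst (sdir d V i) * fst (sdir d V i) + snd (sdir d V i) * snd (sdir d V i).
Proof.
  intros [H3 [Hv _]]. assert (Hd : (0 < d)%nat) by lia.
  assert (Hne : vtx d V i <> vtx d V (S i)).
  { destruct (vtx_mod d V i Hd) as [E1 E2]. rewrite <- E1, <- E2. apply Hv. apply Nat.mod_upper_bound. lia. }
  unfold sdir, psub. destruct (vtx d V (S i)) as [a1 a2] eqn:Ea. destruct (vtx d V i) as [b1 b2] eqn:Eb. simpl.
  destruct (Req_dec a1 b1); destruct (Req_dec a2 b2).
  - subst. exfalso. apply Hne. reflexivity.
  - assert (0 < Rsqr (a2 - b2)) by (apply Rsqr_pos_lt; lra). unfold Rsqr in *. nra.
  - assert (0 < Rsqr (a1 - b1)) by (apply Rsqr_pos_lt; lra). unfold Rsqr in *. nra.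
  - assert (0 < Rsqr (a1 - b1)) by (apply Rsqr_pos_lt; lra). unfold Rsqr in *. nra.
Qed.

Lemma slen_pos d V i : simple_polygon d V -> 0 < slen d V i.
Proof. intros H. unfold slen, pnorm, dot. apply sqrt_lt_R0. apply sdir_pos; auto. Qed.

Lemma tang_unit d V i : simple_polygon d V -> dot (tang d V i) (tang d V i) = 1.
Proof.
  intros H. assert (Hp := sdir_pos d V i H). assert (Hl := slen_pos d V i H).
  unfold tang, slen, pnorm, dot in *. 
  destruct (sdir d V i) as [p1 p2]. simpl in *. 
  set (L := sqrt (p1 * p1 + p2 * p2)) in *.
  assert (HL : L * L = p1 * p1 + p2 * p2) by (apply sqrt_sqrt; lra).
  replace (/ L * p1 * (/ L * p1) + / L * p2 * (/ L * p2)) with ((p1 * p1 + p2 * p2) / (L * L)) by (field; lra).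
  rewrite HL. field. lra.
Qed.

Lemma oa_cs (u v : pt) : dot u u = 1 -> dot v v = 1 ->
  cos (oriented_angle u v) = dot u v /\ sin (oriented_angle u v) = cross u v.
Proof.
  intros Hu Hv. destruct u as [u1 u2], v as [v1 v2]. unfold dot, cross in *. simpl in *.
  set (D := u1 * v1 + u2 * v2). set (X := u1 * v2 - u2 * v1).
  assert (HDX : D * D + X * X = 1). { unfold D, X. nra. }
  assert (HD : -1 <= D <= 1) by (split; nra).
  assert (Hs : sqrt (1 - D²) = Rabs X). { rewrite <- sqrt_Rsqr_abs. f_equal. unfold Rsqr. lra. }
  unfold oriented_angle, dot, cross. simpl. fold D X.
  destruct (Rle_dec 0 X).
  - rewrite cos_acos, sin_acos, Hs, Rabs_pos_eq; auto.
  - rewrite cos_minus, sin_minus, cos_2PI, sin_2PI, cos_acos, sin_acos, Hs, Rabs_left by (auto; lra). split; ring.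
Qed.

Lemma beta_cs d V i j : simple_polygon d V ->
  cos (beta d V i j) = - dot (tang d V j) (tang d V i) /\ sin (beta d V i j) = cross (tang d V j) (tang d V i).
Proof. intros H. unfold beta. destruct (oa_cs (tang d V j) (tang d V i)) as [C S]; try apply tang_unit; auto.
  rewrite cos_minus, sin_minus, cos_PI, sin_PI, C, S. split; ring. Qed.

Lemma cross_own d V i th : simple_polygon d V -> cross (tang d V i) (dirv d V i th) = cos th.
Proof. intros H. assert (U := tang_unit d V i H). unfold dirv, inn, rotate, cross, dot in *.
  rewrite cos_PI2, sin_PI2. destruct (tang d V i) as [a1 a2]. simpl in *.
  transitivity (cos th * (a1 * a1 + a2 * a2)). ring. rewrite U. ring. Qed.

Lemma cross_other d V i j th : simple_polygon d V -> cross (tang d V j) (dirv d V i th) = - cos (beta d V i j - th).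
Proof. intros H. destruct (beta_cs d V i j H) as [C S]. rewrite cos_minus, C, S.
  unfold dirv, inn, rotate, cross, dot. rewrite cos_PI2, sin_PI2.
  destruct (tang d V i) as [a1 a2]. destruct (tang d V j) as [b1 b2]. simpl. ring. Qed.

Lemma Phiij_form d V i j s th : simple_polygon d V ->
  Phiij_s d V i j s th = arc d V j + cross (psub (xline d V i s) (vtx d V j)) (dirv d V i th) / (- cos (beta d V i j - th)).
Proof. intros H. unfold Phiij_s. cbv zeta. rewrite cross_other; auto. Qed.

Lemma Phiij_aff d V i j s th : simple_polygon d V ->
  Phiij_s d V i j s th = Phiij_s d V i j 0 th + s * (cos th / (- cos (beta d V i j - th))).
Proof. intros H. rewrite !Phiij_form; auto.
  assert (E : cross (psub (xline d V i s) (vtx d V j)) (dirv d V i th) =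
     cross (psub (xline d V i 0) (vtx d V j)) (dirv d V i th) + s * cross (tang d V i) (dirv d V i th)).
  { unfold cross, psub, xline, padd, pscale. destruct (tang d V i), (vtx d V i), (vtx d V j), (dirv d V i th). simpl. ring. }
  rewrite E, cross_own; auto. unfold Rdiv. ring. Qed.

Lemma Fstate_snd d V n itin k s lam : snd (Fstate d V n itin k s lam) = thetak d V n itin lam k.
Proof. induction k; simpl; auto. rewrite IHk. auto. Qed.

Lemma F_S d V n itin k s lam : F d V n itin (S k) s lam =
  Phiij_s d V (it n itin k) (it n itin (S k)) (F d V n itin k s lam) (thetak d V n itin lam k).
Proof. unfold F. simpl. rewrite Fstate_snd. auto. Qed.

Lemma rsum_ext_lt f g N : (forall m, (m < N)%nat -> f m = g m) -> rsum f N = rsum g N.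
Proof. induction N; intros H; simpl; auto. rewrite IHN, H; auto. Qed.

Lemma rsum_plus f g N : rsum (fun m => f m + g m) N = rsum f N + rsum g N.
Proof. induction N; simpl. ring. rewrite IHN. ring. Qed.

Lemma rsum_scal c f N : rsum (fun m => c * f m) N = c * rsum f N.
Proof. induction N; simpl. ring. rewrite IHN. ring. Qed.

Definition Gs (lam : R) (m : nat) : R := rsum (fun i => lam ^ i) m.

Lemma geom_id lam m : lam ^ m = 1 + (lam - 1) * Gs lam m.
Proof. induction m; unfold Gs in *; simpl. ring. rewrite IHm at 1. rewrite IHm. ring. Qed.

Lemma Gs_ge1 lam m : 0 < lam -> (0 < m)%nat -> 1 <= Gs lam m.
Proof. intros Hl Hm. induction m. lia. unfold Gs in *; simpl.
  destruct m. simpl. lra. assert (0 < lam ^ S m) by (apply pow_lt; auto).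
  assert (1 <= rsum (fun i => lam ^ i) (S m)) by (apply IHm; lia). lra. Qed.

Lemma Gs_1 m : Gs 1 m = INR m.
Proof. induction m; unfold Gs in *; simpl rsum. simpl; ring. rewrite IHm, pow1, S_INR. ring. Qed.

Lemma neg1_sym N k : (k <= 2 * N)%nat -> (-1) ^ (2 * N - k) = (-1) ^ k.
Proof. intros Hk.
  assert (E : (-1) ^ (2 * N - k) * ((-1) ^ k * (-1) ^ k) = (-1) ^ (2 * N) * (-1) ^ k).
  { rewrite <- Rmult_assoc, <- pow_add. f_equal. f_equal. lia. }
  assert (E1 : (-1) ^ k * (-1) ^ k = 1). { rewrite <- Rpow_mult_distr. replace (-1 * -1) with 1 by ring. apply pow1. }
  assert (E2 : (-1) ^ (2 * N) = 1). { rewrite pow_mult. replace ((-1) ^ 2) with 1 by ring. apply pow1. }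
  rewrite E1, E2 in E. lra. Qed.

Lemma pow_decomp (lam : R) (e : nat -> nat) (b : nat -> R) M :
  rsum (fun k => (- lam) ^ (e k) * b k) M =
  rsum (fun k => (-1) ^ (e k) * b k) M + (lam - 1) * rsum (fun k => (-1) ^ (e k) * b k * Gs lam (e k)) M.
Proof. induction M; simpl. ring. rewrite IHM.
  replace (- lam) with ((-1) * lam) by ring. rewrite Rpow_mult_distr, (geom_id lam (e M)). ring. Qed.

Definition Pp (n : nat) (b : nat -> R) (lam : R) := rsum (fun k => (- lam) ^ (2 * n - k) * b k) (2 * n).
Definition Sv (n : nat) (b : nat -> R) := rsum (fun k => (-1) ^ (2 * n - k) * b k) (2 * n).
Definition Qp (n : nat) (b : nat -> R) (lam : R) := rsum (fun k => (-1) ^ (2 * n - k) * b k * Gs lam (2 * n - k)) (2 * n).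

Lemma P_decomp n b lam : Pp n b lam = Sv n b + (lam - 1) * Qp n b lam.
Proof. unfold Pp, Sv, Qp. apply pow_decomp. Qed.

Lemma theta_unroll d V n itin lam m :
  thetak d V n itin lam m = (- lam) ^ m * theta0 d V n itin lam - rsum (fun k => (- lam) ^ (m - k) * betak d V n itin k) m.
Proof. induction m. simpl. ring. 
  change (thetak d V n itin lam (S m)) with (lam * (betak d V n itin m - thetak d V n itin lam m)).
  rewrite IHm. cbn [rsum].
  rewrite (rsum_ext_lt (fun k => (- lam) ^ (S m - k) * betak d V n itin k) (fun k => (- lam) * ((- lam) ^ (m - k) * betak d V n itin k))).
  rewrite rsum_scal. replace (S m - m)%nat with 1%nat by lia. cbn [pow]. ring.
  intros k Hk. replace (S m - k)%nat with (S (m - k)) by lia. cbn [pow]. ring. Qed.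

Lemma theta0_neq1 d V n itin lam : lam <> 1 ->
  theta0 d V n itin lam = / (lam ^ (2 * n) - 1) * Pp n (betak d V n itin) lam.
Proof. intros H. unfold theta0. destruct (Req_dec_T lam 1). contradiction. reflexivity. Qed.

Lemma abs_pow_le2 lam i : 0 < lam < 2 -> Rabs (lam ^ i) <= 2 ^ i.
Proof. intros H. rewrite <- RPow_abs. apply pow_incr. split. apply Rabs_pos. rewrite Rabs_pos_eq; lra. Qed.

Lemma Gs_bound lam m : 0 < lam < 2 -> Rabs (Gs lam m) <= Gs 2 m.
Proof. intros H. unfold Gs. eapply Rle_trans. apply rsum_abs. apply rsum_le. intro. apply abs_pow_le2; auto. Qed.

Lemma S_zero d V n itin delta : (1 < n)%nat -> 0 < delta <= 1 ->
  (forall lam, 1 - delta < lam < 1 + delta -> - (PI / 2) < theta0 d V n itin lam < PI / 2) ->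
  Sv n (betak d V n itin) = 0.
Proof.
  intros Hn Hd Hb. set (b := betak d V n itin).
  set (MR := Gs 2 (2 * n)). set (MQ := rsum (fun k => Rabs (b k) * Gs 2 (2 * n - k)) (2 * n)).
  assert (HMR : 0 <= MR).
  { unfold MR. assert (1 <= Gs 2 (2 * n)) by (apply Gs_ge1; [lra|lia]). lra. }
  assert (HMQ : 0 <= MQ).
  { unfold MQ. apply rsum_nonneg. intro k. apply Rmult_le_pos. apply Rabs_pos.
    eapply Rle_trans; [apply Rabs_pos|apply (Gs_bound 1); lra]. }
  set (M := PI / 2 * MR + MQ).
  assert (HM : 0 <= M) by (unfold M; assert (0 < PI) by apply PI_RGT_0; nra).
  assert (Key : forall lam, 1 - delta < lam < 1 + delta -> lam <> 1 -> Rabs (Sv n b) <= Rabs (lam - 1) * M).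
  { intros lam Hl Hne.
    assert (Hl2 : 0 < lam < 2) by lra.
    assert (HG : 1 <= Gs lam (2 * n)) by (apply Gs_ge1; [lra|lia]).
    assert (Hp : lam ^ (2 * n) - 1 = (lam - 1) * Gs lam (2 * n)) by (rewrite geom_id; ring).
    assert (Hnz : lam ^ (2 * n) - 1 <> 0). { rewrite Hp. apply Rmult_integral_contrapositive. split; lra. }
    assert (Ht := theta0_neq1 d V n itin lam Hne). fold b in Ht.
    assert (HP : Pp n b lam = theta0 d V n itin lam * (lam ^ (2 * n) - 1)) by (rewrite Ht; field; auto).
    assert (HS : Sv n b = (lam - 1) * (theta0 d V n itin lam * Gs lam (2 * n) - Qp n b lam)).
    { assert (E := P_decomp n b lam). rewrite HP, Hp in E. lra. }
    rewrite HS, Rabs_mult. apply Rmult_le_compat_l. apply Rabs_pos.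
    unfold Rminus. eapply Rle_trans; [apply Rabs_triang|]. rewrite Rabs_Ropp. unfold M.
    apply Rplus_le_compat.
    - rewrite Rabs_mult. apply Rmult_le_compat. apply Rabs_pos. apply Rabs_pos.
      apply Rabs_le. specialize (Hb lam Hl). lra. apply Gs_bound; lra.
    - unfold Qp, MQ. eapply Rle_trans. apply rsum_abs. apply rsum_le. intro k.
      rewrite !Rabs_mult, pow_1_abs, Rmult_1_l. apply Rmult_le_compat_l. apply Rabs_pos. apply Gs_bound; lra. }
  destruct (Req_dec (Sv n b) 0) as [E|E]; auto. exfalso.
  assert (HSp : 0 < Rabs (Sv n b)) by (apply Rabs_pos_lt; auto).
  set (eps := Rmin (delta / 2) (Rabs (Sv n b) / (2 * (M + 1)))).
  assert (He : 0 < eps) by (apply Rmin_glb_lt; [lra|apply Rdiv_lt_0_compat; lra]).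
  assert (He1 : eps <= delta / 2) by apply Rmin_l.
  assert (He2 : eps <= Rabs (Sv n b) / (2 * (M + 1))) by apply Rmin_r.
  specialize (Key (1 + eps) ltac:(lra) ltac:(lra)).
  replace (1 + eps - 1) with eps in Key by ring. rewrite (Rabs_pos_eq eps) in Key by lra.
  assert (eps * M <= Rabs (Sv n b) / (2 * (M + 1)) * M) by (apply Rmult_le_compat_r; lra).
  assert (Rabs (Sv n b) / (2 * (M + 1)) * M < Rabs (Sv n b)).
  { apply Rmult_lt_reg_r with (2 * (M + 1)). lra.
    replace (Rabs (Sv n b) / (2 * (M + 1)) * M * (2 * (M + 1))) with (Rabs (Sv n b) * M) by (field; lra). nra. }
  lra.
Qed.

Lemma theta0_QR d V n itin lam : (1 < n)%nat -> Sv n (betak d V n itin) = 0 -> 0 < lam ->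
  theta0 d V n itin lam = Qp n (betak d V n itin) lam / Gs lam (2 * n).
Proof.
  intros Hn HS Hl. set (b := betak d V n itin) in *.
  assert (HG : 1 <= Gs lam (2 * n)) by (apply Gs_ge1; [lra|lia]).
  destruct (Req_dec lam 1) as [E|E].
  - subst lam. unfold theta0. destruct (Req_dec_T 1 1) as [_|C]; [|contradiction].
    unfold theta_hat0_formula. fold b. rewrite Gs_1.
    assert (INR (2 * n) <> 0) by (apply not_0_INR; lia).
    assert (HQ : Qp n b 1 = rsum (fun k => (-1) ^ S k * INR k * b k) (2 * n)).
    { unfold Qp. rewrite (rsum_ext_lt _ (fun k => INR (2 * n) * ((-1) ^ (2 * n - k) * b k) + (-1) ^ S k * INR k * b k)).
      rewrite rsum_plus, rsum_scal. fold (Sv n b). rewrite HS. ring.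
      intros k Hk. rewrite Gs_1, minus_INR by lia. rewrite neg1_sym by lia. cbn [pow]. ring. }
    rewrite HQ. field. auto.
  - rewrite theta0_neq1 by auto. fold b.
    assert (Hp : lam ^ (2 * n) - 1 = (lam - 1) * Gs lam (2 * n)) by (rewrite geom_id; ring).
    rewrite P_decomp, HS, Hp. field. split; lra.
Qed.

Lemma theta0_P d V n itin lam : (1 < n)%nat -> Sv n (betak d V n itin) = 0 -> 0 < lam ->
  theta0 d V n itin lam * (lam ^ (2 * n) - 1) = Pp n (betak d V n itin) lam.
Proof. intros Hn HS Hl. rewrite theta0_QR by auto. rewrite P_decomp, HS.
  assert (1 <= Gs lam (2 * n)) by (apply Gs_ge1; [lra|lia]).
  rewrite geom_id. field. lra. Qed.

Lemma theta_2n d V n itin lam : (1 < n)%nat -> Sv n (betak d V n itin) = 0 -> 0 < lam ->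
  thetak d V n itin lam (2 * n) = theta0 d V n itin lam.
Proof. intros Hn HS Hl. rewrite theta_unroll. fold (Pp n (betak d V n itin) lam).
  rewrite <- theta0_P by auto.
  replace ((- lam) ^ (2 * n)) with (lam ^ (2 * n)). ring.
  rewrite !pow_mult. f_equal. ring. Qed.

Lemma arc_mono d V i k : arc d V i <= arc d V (i + k).
Proof. induction k. rewrite Nat.add_0_r; lra. replace (i + S k)%nat with (S (i + k)) by lia. simpl.
  assert (0 <= slen d V (i + k)) by (unfold slen, pnorm; apply sqrt_pos). lra. Qed.

Lemma side_unique d V s i j : on_side_int d V s i -> on_side_int d V s j -> i = j.
Proof. intros [Hi [Hi1 Hi2]] [Hj [Hj1 Hj2]].
  destruct (Nat.lt_trichotomy i j) as [H|[H|H]]; auto; exfalso.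
  - assert (E := arc_mono d V (S i) (j - S i)). replace (S i + (j - S i))%nat with j in E by lia. lra.
  - assert (E := arc_mono d V (S j) (i - S j)). replace (S j + (i - S j))%nat with i in E by lia. lra.
Qed.

Lemma xline_seg d V s i : simple_polygon d V -> on_side_int d V s i ->
  xline d V i s = seg_pt d V i ((s - arc d V i) / slen d V i) /\ 0 < (s - arc d V i) / slen d V i < 1.
Proof. intros Hp [Hi [H1 H2]]. assert (Hl := slen_pos d V i Hp). simpl in H2. split.
  - unfold xline, seg_pt, tang, padd, pscale. destruct (vtx d V i), (sdir d V i). simpl. f_equal; field; lra.
  - split. apply Rdiv_lt_0_compat; lra. apply Rmult_lt_reg_r with (slen d V i); auto.
    unfold Rdiv. rewrite Rmult_assoc, Rinv_l by lra. lra.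
Qed.

Lemma xline_boundary d V s i : simple_polygon d V -> on_side_int d V s i -> on_boundary d V (xline d V i s).
Proof. intros Hp H. destruct (xline_seg d V s i Hp H) as [E B]. exists i, ((s - arc d V i) / slen d V i).
  destruct H as [Hi _]. split; auto. split; [lra|auto]. Qed.

Lemma inn_unit d V i : simple_polygon d V -> dot (inn d V i) (inn d V i) = 1.
Proof. intros H. assert (U := tang_unit d V i H). unfold inn, rotate, dot in *. rewrite cos_PI2, sin_PI2.
  destruct (tang d V i) as [a1 a2]. simpl in *. lra. Qed.

Lemma dirv0 d V i : dirv d V i 0 = inn d V i.
Proof. unfold dirv, rotate. rewrite cos_0, sin_0. destruct (inn d V i). simpl. f_equal; ring. Qed.

Lemma rotate_fix (th : R) (w : pt) : dot w w = 1 -> rotate th w = w -> - (PI / 2) < th < PI / 2 -> th = 0.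
Proof. intros U E Hth. destruct w as [w1 w2]. unfold rotate, dot in *. simpl in *. injection E as E1 E2.
  assert (Hs : sin th = 0).
  { transitivity (sin th * (w1 * w1 + w2 * w2)). rewrite U; ring.
    transitivity (w1 * (sin th * w1 + cos th * w2) - w2 * (cos th * w1 - sin th * w2)). ring.
    rewrite E1, E2. ring. }
  assert (HPI := PI_RGT_0).
  destruct (Rtotal_order th 0) as [H|[H|H]]; auto; exfalso.
  - assert (0 < sin (- th)) by (apply sin_gt_0; lra). rewrite sin_neg in H0. lra.
  - assert (0 < sin th) by (apply sin_gt_0; lra). lra.
Qed.

Lemma rsum_zero f N : (forall m, (m < N)%nat -> f m = 0) -> rsum f N = 0.
Proof. intros H. rewrite (rsum_ext_lt f (fun _ => 0 * 0)) by (intros; rewrite H; auto; ring).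
  rewrite rsum_scal. ring. Qed.

Lemma Phi_unfold d V s th s' th' : Phi d V (s, th) (s', th') ->
  exists i j, on_side_int d V s i /\ on_side_int d V s' j /\
    - (PI / 2) < th < PI / 2 /\ - (PI / 2) < th' < PI / 2 /\
    exists t, 0 < t /\
      padd (xline d V i s) (pscale t (dirv d V i th)) = xline d V j s' /\
      (forall t', 0 < t' < t -> ~ on_boundary d V (padd (xline d V i s) (pscale t' (dirv d V i th)))) /\
      dirv d V j th' = reflect d V j (dirv d V i th).
Proof. intros H. exact H. Qed.

Lemma no_flat d V n itin thh C : simple_polygon d V -> (1 < n)%nat ->
  periodic_cylinder d V n itin thh C -> thh O = theta_hat0_formula d V n itin ->
  (forall k, (k < 2 * n)%nat -> betak d V n itin k = 0) -> False.
Proof.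
  intros Hp Hn [[p Cp] HC] Hth0 Hb.
  assert (Hf : theta_hat0_formula d V n itin = 0).
  { unfold theta_hat0_formula. rewrite rsum_zero. ring. intros m Hm. rewrite Hb by auto. ring. }
  rewrite Hf in Hth0.
  apply HC in Cp. destruct Cp as [q [Hq0 [Hq2n [Hphi [Hne Hside]]]]].
  assert (Hne2 : q 2%nat <> q O) by (rewrite Hq0; apply Hne; lia).
  assert (Hb0 : beta d V (itin O) (itin 1%nat) = 0).
  { rewrite <- (Hb O) by lia. unfold betak, it. rewrite Nat.Div0.mod_0_l. rewrite Nat.mod_small by lia. auto. }
  assert (Hphi0 := Hphi O ltac:(lia)). assert (Hphi1 := Hphi 1%nat ltac:(lia)).
  destruct (Hside O ltac:(lia)) as [Hs0 Ht0]. destruct (Hside 1%nat ltac:(lia)) as [Hs1 Ht1].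
  destruct (Hside 2%nat ltac:(lia)) as [Hs2 Ht2].
  clear Hphi Hne Hside Hq2n HC Hq0.
  set (i0 := itin O) in *. set (i1 := itin 1%nat) in *. set (i2 := itin 2%nat) in *.
  destruct (q O) as [s0 t0]. destruct (q 1%nat) as [s1 t1]. destruct (q 2%nat) as [s2 t2]. simpl in *.
  rewrite Hth0 in Ht0. subst t0. clear Ht1 Ht2.
  assert (Ua := tang_unit d V i0 Hp). assert (Ub := tang_unit d V i1 Hp).
  destruct (beta_cs d V i0 i1 Hp) as [Cb _]. rewrite Hb0, cos_0 in Cb.
  assert (Htg : tang d V i1 = pscale (-1) (tang d V i0)).
  { unfold dot, pscale in *. destruct (tang d V i0) as [a1 a2], (tang d V i1) as [b1 b2]. simpl in *.
    assert ((a1 + b1) * (a1 + b1) + (a2 + b2) * (a2 + b2) = 0) by nra.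
    assert (X1 : (a1 + b1) * (a1 + b1) = 0) by nra. assert (X2 : (a2 + b2) * (a2 + b2) = 0) by nra.
    apply Rmult_integral in X1. apply Rmult_integral in X2. f_equal; destruct X1, X2; lra. }
  set (w := inn d V i0).
  assert (Uw : dot w w = 1) by apply inn_unit, Hp.
  assert (Hw1 : inn d V i1 = pscale (-1) w).
  { unfold w, inn, rotate. rewrite Htg. unfold pscale. destruct (tang d V i0). simpl. f_equal; ring. }
  apply Phi_unfold in Hphi0. destruct Hphi0 as [i [j [Hsi [Hsj [_ [Hr1 [t [Ht [Hpos [Hfree Hrefl]]]]]]]]]].
  assert (i = i0) by (eapply side_unique; eauto). subst i.
  assert (j = i1) by (eapply side_unique; eauto). subst j.
  rewrite dirv0 in *. fold w in Hpos, Hfree, Hrefl.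
  assert (t1 = 0).
  { apply (rotate_fix t1 (inn d V i1)); auto. apply inn_unit; auto.
    change (rotate t1 (inn d V i1)) with (dirv d V i1 t1). rewrite Hrefl. unfold reflect. rewrite Hw1.
    unfold w, dot, pscale, psub in *. destruct (inn d V i0) as [w1 w2]. simpl in *.
    assert (H1 : w1 * (w1 * w1 + w2 * w2) = w1) by (rewrite Uw; ring).
    assert (H2 : w2 * (w1 * w1 + w2 * w2) = w2) by (rewrite Uw; ring). f_equal; lra. }
  subst t1.
  apply Phi_unfold in Hphi1. destruct Hphi1 as [i [j [Hsi' [Hsj' [_ [Hr2 [t' [Ht' [Hpos' [Hfree' Hrefl']]]]]]]]]].
  assert (i = i1) by (eapply side_unique; eauto). subst i.
  rewrite dirv0, Hw1 in *.
  assert (E : forall u, padd (xline d V i1 s1) (pscale u (pscale (-1) w)) = padd (xline d V i0 s0) (pscale (t - u) w)).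
  { intro u. rewrite <- Hpos. unfold padd, pscale. destruct w. simpl. f_equal; ring. }
  assert (Htt : t' = t).
  { destruct (Rtotal_order t' t) as [H|[H|H]]; auto; exfalso.
    - apply (Hfree (t - t')). lra. rewrite <- E, Hpos'. apply xline_boundary; auto.
    - apply (Hfree' t). lra. rewrite E. replace (t - t) with 0 by ring.
      replace (padd (xline d V i0 s0) (pscale 0 w)) with (xline d V i0 s0).
      apply xline_boundary; auto. unfold padd, pscale. destruct (xline d V i0 s0), w. simpl. f_equal; ring. }
  subst t'.
  assert (Hpt : xline d V j s2 = xline d V i0 s0).
  { rewrite <- Hpos', E. replace (t - t) with 0 by ring. unfold padd, pscale. destruct (xline d V i0 s0), w. simpl. f_equal; ring. }
  assert (j = i0).
  { destruct (Nat.eq_dec j i0) as [e|e]; auto. exfalso.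
    destruct (xline_seg d V s2 j Hp Hsj') as [E2 B2]. destruct (xline_seg d V s0 i0 Hp Hsi) as [E0 B0].
    destruct Hp as [_ [_ [_ [Hsimp _]]]].
    destruct Hsj' as [Hjd _]. destruct Hsi as [Hid _].
    destruct (Hsimp j i0 ((s2 - arc d V j) / slen d V j) ((s0 - arc d V i0) / slen d V i0) Hjd Hid e ltac:(lra) ltac:(lra) ltac:(rewrite <- E2, <- E0; exact Hpt)) as [[_ [A _]]|[_ [A _]]]; lra. }
  subst j.
  assert (s2 = s0).
  { unfold xline, padd, pscale in Hpt. unfold dot in Ua. destruct (vtx d V i0), (tang d V i0) as [a1 a2]. simpl in *.
    injection Hpt as P1 P2.
    assert (Q1 : (s2 - s0) * a1 = 0) by lra. assert (Q2 : (s2 - s0) * a2 = 0) by lra.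
    assert (H : (s2 - s0) * (a1 * a1 + a2 * a2) = 0).
    { replace ((s2 - s0) * (a1 * a1 + a2 * a2)) with (((s2 - s0) * a1) * a1 + ((s2 - s0) * a2) * a2) by ring.
      rewrite Q1, Q2. ring. }
    rewrite Ua in H. lra. }
  subst s2.
  assert (t2 = 0).
  { apply (rotate_fix t2 w); auto.
    change (rotate t2 w) with (dirv d V i0 t2). rewrite Hrefl'. unfold reflect. fold w.
    unfold dot, pscale, psub in *. destruct w as [w1 w2]. simpl in *.
    assert (H1 : w1 * (w1 * w1 + w2 * w2) = w1) by (rewrite Uw; ring).
    assert (H2 : w2 * (w1 * w1 + w2 * w2) = w2) by (rewrite Uw; ring). f_equal; lra. }
  subst t2. apply Hne2. reflexivity.
Qed.

Fixpoint rprod (f : nat -> R) (m : nat) : R := match m with O => 1 | S m' => rprod f m' * f m' end.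

Lemma rprod_ext_lt f g m : (forall i, (i < m)%nat -> f i = g i) -> rprod f m = rprod g m.
Proof. induction m; intros H; simpl; auto. rewrite IHm, H; auto. Qed.

Lemma rprod_pos f m : (forall i, (i < m)%nat -> 0 < f i) -> 0 < rprod f m.
Proof. induction m; intros H; simpl. lra. apply Rmult_lt_0_compat; auto. Qed.

Lemma rprod_ge1 f m : (forall i, (i < m)%nat -> 1 <= f i) -> 1 <= rprod f m.
Proof. induction m; intros H; simpl. lra. assert (1 <= rprod f m) by auto. assert (1 <= f m) by auto. nra. Qed.

Lemma rprod_le1 f m : (forall i, (i < m)%nat -> 0 < f i <= 1) -> rprod f m <= 1.
Proof. induction m; intros H; simpl. lra. assert (rprod f m <= 1) by auto. assert (0 < rprod f m) by (apply rprod_pos; intros; apply H; lia).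
  assert (0 < f m <= 1) by auto. nra. Qed.

Lemma rprod_gt1 f m i0 : (forall i, (i < m)%nat -> 1 <= f i) -> (i0 < m)%nat -> 1 < f i0 -> 1 < rprod f m.
Proof. induction m; intros H Hi Hf. lia. simpl. destruct (Nat.eq_dec i0 m).
  - subst. assert (1 <= rprod f m) by (apply rprod_ge1; auto). nra.
  - assert (1 < rprod f m) by (apply IHm; auto; lia). assert (1 <= f m) by auto. nra. Qed.

Lemma rprod_lt1 f m i0 : (forall i, (i < m)%nat -> 0 < f i <= 1) -> (i0 < m)%nat -> f i0 < 1 -> rprod f m < 1.
Proof. induction m; intros H Hi Hf. lia. simpl.
  assert (0 < rprod f m) by (apply rprod_pos; intros; apply H; lia). destruct (Nat.eq_dec i0 m).
  - subst. assert (rprod f m <= 1) by (apply rprod_le1; auto). assert (0 < f m) by (apply H; lia). nra.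
  - assert (rprod f m < 1) by (apply IHm; auto; lia). assert (0 < f m <= 1) by auto. nra. Qed.

Lemma rprod_neg f g m : rprod (fun i => f i / (- g i)) m = (-1) ^ m * rprod (fun i => f i / g i) m.
Proof. induction m; simpl. ring. rewrite IHm. unfold Rdiv. rewrite Rinv_opp. ring. Qed.

Lemma rprod_shift f m : rprod (fun i => f (S i)) m * f O = rprod f m * f m.
Proof. induction m; simpl. ring. replace (rprod (fun i => f (S i)) m * f (S m) * f O) with
  ((rprod (fun i => f (S i)) m * f O) * f (S m)) by ring. rewrite IHm. ring. Qed.

Lemma rprod_divmul f g m : (forall i, (i < m)%nat -> g i <> 0) ->
  rprod (fun i => f i / g i) m * rprod g m = rprod f m.
Proof. induction m; intros H; simpl. ring.
  replace (rprod (fun i => f i / g i) m * (f m / g m) * (rprod g m * g m)) with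
    ((rprod (fun i => f i / g i) m * rprod g m) * (f m / g m * g m)) by ring.
  rewrite IHm by auto. field. auto. Qed.

Lemma cos_abs x : cos (Rabs x) = cos x.
Proof. destruct (Rcase_abs x). rewrite Rabs_left by auto. apply cos_neg. rewrite Rabs_right; auto. Qed.

Lemma cos_cmp x y : Rabs x <= Rabs y -> Rabs y < PI / 2 -> cos y <= cos x /\ (Rabs x < Rabs y -> cos y < cos x).
Proof. intros H1 H2. assert (HPI := PI_RGT_0). rewrite <- (cos_abs x), <- (cos_abs y).
  assert (S : Rabs x < Rabs y -> cos (Rabs y) < cos (Rabs x)).
  { intros. apply cos_decreasing_1; try apply Rabs_pos; lra. }
  split; auto. destruct (Req_dec (Rabs x) (Rabs y)) as [E|E]. rewrite E; lra. left; apply S; lra. Qed.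

Lemma cos_ratio lam u : 0 < lam -> - (PI / 2) < u < PI / 2 -> - (PI / 2) < lam * u < PI / 2 ->
  0 < cos (lam * u) / cos u /\
  (lam < 1 -> 1 <= cos (lam * u) / cos u) /\ (lam < 1 -> u <> 0 -> 1 < cos (lam * u) / cos u) /\
  (1 < lam -> cos (lam * u) / cos u <= 1) /\ (1 < lam -> u <> 0 -> cos (lam * u) / cos u < 1) /\
  (lam = 1 -> cos (lam * u) / cos u = 1).
Proof. intros Hl Hu Hlu.
  assert (Cu : 0 < cos u) by (apply cos_gt_0; lra). assert (Clu : 0 < cos (lam * u)) by (apply cos_gt_0; lra).
  assert (Au : Rabs u < PI / 2) by (apply Rabs_def1; lra). assert (Alu : Rabs (lam * u) < PI / 2) by (apply Rabs_def1; lra).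
  assert (Eabs : Rabs (lam * u) = lam * Rabs u) by (rewrite Rabs_mult, Rabs_pos_eq; lra).
  assert (G : forall a b, 0 < b -> (1 <= a / b <-> b <= a)).
  { intros a b Hb. split; intro H. apply Rmult_le_reg_r with (/ b). apply Rinv_0_lt_compat; auto.
    rewrite Rinv_r by lra. auto. apply Rmult_le_reg_r with b; auto. unfold Rdiv. rewrite Rmult_assoc, Rinv_l; lra. }
  assert (G' : forall a b, 0 < b -> (1 < a / b <-> b < a)).
  { intros a b Hb. split; intro H. apply Rmult_lt_reg_r with (/ b). apply Rinv_0_lt_compat; auto.
    rewrite Rinv_r by lra. auto. apply Rmult_lt_reg_r with b; auto. unfold Rdiv. rewrite Rmult_assoc, Rinv_l; lra. }
  assert (L : forall a b, 0 < b -> (a / b <= 1 <-> a <= b)).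
  { intros a b Hb. split; intro H. apply Rmult_le_reg_r with (/ b). apply Rinv_0_lt_compat; auto.
    rewrite Rinv_r by lra. auto. apply Rmult_le_reg_r with b; auto. unfold Rdiv. rewrite Rmult_assoc, Rinv_l; lra. }
  assert (L' : forall a b, 0 < b -> (a / b < 1 <-> a < b)).
  { intros a b Hb. split; intro H. apply Rmult_lt_reg_r with (/ b). apply Rinv_0_lt_compat; auto.
    rewrite Rinv_r by lra. auto. apply Rmult_lt_reg_r with b; auto. unfold Rdiv. rewrite Rmult_assoc, Rinv_l; lra. }
  assert (Ru : u <> 0 -> 0 < Rabs u) by (intro; apply Rabs_pos_lt; auto).
  assert (Pu := Rabs_pos u).
  split; [apply Rdiv_lt_0_compat; auto|]. split; [|split; [|split; [|split]]].
  - intro H. apply G; auto. apply (cos_cmp (lam * u) u); auto. rewrite Eabs. nra.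
  - intros H Hu0. apply G'; auto. apply (cos_cmp (lam * u) u); auto. rewrite Eabs. nra. rewrite Eabs. specialize (Ru Hu0). nra.
  - intro H. apply L; auto. apply (cos_cmp u (lam * u)); auto. rewrite Eabs. nra.
  - intros H Hu0. apply L'; auto. apply (cos_cmp u (lam * u)); auto. rewrite Eabs. nra. rewrite Eabs. specialize (Ru Hu0). nra.
  - intro H. subst. rewrite Rmult_1_l. field. lra.
Qed.

Lemma ana_rsum (f : nat -> R -> R) N x0 : (forall m, ana (f m) x0) -> ana (fun x => rsum (fun m => f m x) N) x0.
Proof. intros H. induction N; simpl. apply ana_const. apply ana_plus; auto. Qed.

Lemma ana_pow i x0 : ana (fun x => x ^ i) x0.
Proof. induction i. simpl. apply ana_const. apply (ana_eq (fun x => x * x ^ i)). apply ana_mult; auto. apply ana_id.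
  intro; reflexivity. Qed.

Lemma ana_Gs m x0 : ana (fun x => Gs x m) x0.
Proof. unfold Gs. apply (ana_rsum (fun i x => x ^ i)). intro; apply ana_pow. Qed.

Lemma ana_theta d V n itin x0 k : (1 < n)%nat -> Sv n (betak d V n itin) = 0 -> 0 < x0 ->
  ana (fun lam => thetak d V n itin lam k) x0.
Proof. intros Hn HS Hx. induction k.
  - apply (ana_ext (fun lam => Qp n (betak d V n itin) lam / Gs lam (2 * n))).
    + apply ana_div. unfold Qp. apply (ana_rsum (fun k x => (-1) ^ (2 * n - k) * betak d V n itin k * Gs x (2 * n - k))).
      intro m. apply ana_mult. apply ana_const. apply ana_Gs. apply ana_Gs.
      assert (1 <= Gs x0 (2 * n)) by (apply Gs_ge1; [lra|lia]). lra.
    + exists x0. split; auto. intros x Hx'. simpl. symmetry. apply theta0_QR; auto.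
      apply Rabs_def2 in Hx'. lra.
  - apply (ana_eq (fun lam => lam * (betak d V n itin k - thetak d V n itin lam k))).
    apply ana_mult. apply ana_id. apply ana_minus; auto. apply ana_const. intro; reflexivity.
Qed.

Ltac ana_step := match goal with
  | |- ana (fun _ => ?k) _ => apply ana_const
  | |- ana (fun x => x) _ => apply ana_id
  | |- ana (fun x => _ + _) _ => apply ana_plus
  | |- ana (fun x => _ - _) _ => apply ana_minus
  | |- ana (fun x => _ / _) _ => apply ana_div
  | |- ana (fun x => _ * _) _ => apply ana_mult
  | |- ana (fun x => - _) _ => apply ana_opp
  | |- ana (fun x => cos _) _ => apply ana_cos
  | |- ana (fun x => sin _) _ => apply ana_sin
  | |- ana _ _ => assumption
  end.
Ltac ana_auto := repeat ana_step.

Lemma ana_Phiij d V i j g th x0 : simple_polygon d V -> ana g x0 -> ana th x0 ->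
  - (PI / 2) < beta d V i j - th x0 < PI / 2 ->
  ana (fun lam => Phiij_s d V i j (g lam) (th lam)) x0.
Proof. intros Hp Hg Ht Hb.
  apply (ana_eq (fun lam => arc d V j + cross (psub (xline d V i (g lam)) (vtx d V j)) (dirv d V i (th lam)) / (- cos (beta d V i j - th lam)))).
  2: { intro. rewrite Phiij_form; auto. }
  unfold cross, psub, xline, padd, pscale, dirv, rotate. cbn [fst snd].
  ana_auto.
  assert (0 < cos (beta d V i j - th x0)) by (apply cos_gt_0; lra). lra.
Qed.

Definition sl d V n itin k lam := rprod (fun i => cos (thetak d V n itin lam i) /
   (- cos (betak d V n itin i - thetak d V n itin lam i))) k.

Lemma F_aff d V n itin k s lam : simple_polygon d V ->
  F d V n itin k s lam = F d V n itin k 0 lam + s * sl d V n itin k lam.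
Proof. intros Hp. induction k. unfold F, sl; simpl; ring.
  rewrite !F_S. rewrite (Phiij_aff d V _ _ (F d V n itin k s lam)) by auto.
  rewrite (Phiij_aff d V _ _ (F d V n itin k 0 lam)) by auto. rewrite IHk. unfold sl. cbn [rprod]. unfold betak. ring. Qed.

Theorem lemma3p3
  (d : nat) (V : nat -> pt) (Hpoly : simple_polygon d V)
  (n : nat) (Hn : (1 < n)%nat)
  (itin : nat -> nat) (thh : nat -> R) (C : pt -> Prop)
  (HC : periodic_cylinder d V n itin thh C)
  (Hth0 : thh O = theta_hat0_formula d V n itin)
  (delta : R) (Hdelta : 0 < delta <= 1)
  (Hth : forall lam, 1 - delta < lam < 1 + delta -> forall k, (k <= 2 * n)%nat ->
           - (PI / 2) < thetak d V n itin lam k < PI / 2)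
  (Hdom : forall lam, 1 - delta < lam < 1 + delta -> forall k, (k < 2 * n)%nat ->
           - (PI / 2) < betak d V n itin k - thetak d V n itin lam k < PI / 2) :
  exists A B : R -> R,
    analytic_on A (1 - delta) (1 + delta) /\ analytic_on B (1 - delta) (1 + delta) /\
    forall lam, 1 - delta < lam < 1 + delta ->
      (forall s, F d V n itin (2 * n) s lam = A lam * s + B lam) /\
      0 < A lam /\
      (1 < A lam <-> lam < 1) /\
      (A lam < 1 <-> 1 < lam).
Proof.
  assert (HS : Sv n (betak d V n itin) = 0).
  { apply (S_zero d V n itin delta Hn Hdelta). intros lam Hl. exact (Hth lam Hl O ltac:(lia)). }
  exists (fun lam => F d V n itin (2 * n) 1 lam - F d V n itin (2 * n) 0 lam), (fun lam => F d V n itin (2 * n) 0 lam).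
  assert (HanaF : forall x0, 1 - delta < x0 < 1 + delta -> forall k, (k <= 2 * n)%nat -> forall s,
            ana (fun lam => F d V n itin k s lam) x0).
  { intros x0 Hx0 k. induction k; intros Hk s.
    - apply (ana_eq (fun _ => s)). apply ana_const. intro; reflexivity.
    - apply (ana_eq (fun lam => Phiij_s d V (it n itin k) (it n itin (S k)) (F d V n itin k s lam) (thetak d V n itin lam k))).
      apply ana_Phiij; auto. apply IHk; lia. apply ana_theta; auto; lra. exact (Hdom x0 Hx0 k ltac:(lia)).
      intro lam. symmetry. apply F_S. }
  split. apply ana_analytic. intros x0 Hx0. apply ana_minus; apply HanaF; auto.
  split. apply ana_analytic. intros x0 Hx0. apply HanaF; auto.
  intros lam Hl.
  assert (HA : F d V n itin (2 * n) 1 lam - F d V n itin (2 * n) 0 lam = sl d V n itin (2 * n) lam).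
  { rewrite (F_aff d V n itin (2 * n) 1 lam Hpoly). ring. }
  rewrite HA. split. intro s. rewrite (F_aff d V n itin (2 * n) s lam Hpoly). ring.
  assert (Hl0 : 0 < lam) by lra.
  set (u := fun i => betak d V n itin i - thetak d V n itin lam i).
  assert (Hthu : forall i, thetak d V n itin lam (S i) = lam * u i) by reflexivity.
  assert (Hcu : forall i, (i < 2 * n)%nat -> 0 < cos (u i)).
  { intros i Hi. apply cos_gt_0; apply (Hdom lam Hl i Hi). }
  set (rho := fun i => cos (lam * u i) / cos (u i)).
  assert (Hsl : sl d V n itin (2 * n) lam = rprod rho (2 * n)).
  { unfold sl. rewrite rprod_neg. replace ((-1) ^ (2 * n)) with 1.
    2: { rewrite pow_mult. replace ((-1) ^ 2) with 1 by ring. rewrite pow1. auto. }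
    rewrite Rmult_1_l.
    apply Rmult_eq_reg_r with (rprod (fun i => cos (u i)) (2 * n)).
    2: { assert (0 < rprod (fun i => cos (u i)) (2 * n)) by (apply rprod_pos; auto). lra. }
    fold u. rewrite rprod_divmul. 2: { intros i Hi. specialize (Hcu i Hi). lra. }
    unfold rho. rewrite rprod_divmul. 2: { intros i Hi. specialize (Hcu i Hi). lra. }
    set (f := fun i => cos (thetak d V n itin lam i)).
    rewrite (rprod_ext_lt (fun i => cos (lam * u i)) (fun i => f (S i))).
    2: { intros i Hi. unfold f. rewrite Hthu. auto. }
    assert (Hsh := rprod_shift f (2 * n)).
    assert (Hf : f (2 * n)%nat = f O) by (unfold f; rewrite theta_2n by auto; reflexivity).
    assert (Hf0 : 0 < f O) by (unfold f; apply cos_gt_0; apply (Hth lam Hl O); lia).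
    rewrite Hf in Hsh. apply Rmult_eq_reg_r with (f O); lra. }
  rewrite Hsl.
  assert (Hfac : forall i, (i < 2 * n)%nat -> _) by (intros i Hi; exact (cos_ratio lam (u i) Hl0 (Hdom lam Hl i Hi)
      ltac:(rewrite <- Hthu; apply (Hth lam Hl (S i)); lia))).
  assert (Hex : lam <> 1 -> exists i, (i < 2 * n)%nat /\ u i <> 0).
  { intros Hne. destruct (classic (exists i, (i < 2 * n)%nat /\ u i <> 0)) as [H|H]; auto. exfalso.
    assert (Hu0 : forall i, (i < 2 * n)%nat -> u i = 0).
    { intros i Hi. destruct (Req_dec (u i) 0); auto. exfalso. apply H. eauto. }
    assert (Ht0 : thetak d V n itin lam O = 0).
    { change (thetak d V n itin lam O) with (theta0 d V n itin lam). rewrite <- (theta_2n d V n itin lam) by auto. replace (2 * n)%nat with (S (2 * n - 1)) by lia.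
      rewrite Hthu, Hu0 by lia. ring. }
    apply (no_flat d V n itin thh C Hpoly Hn HC Hth0). intros k Hk.
    assert (Hk0 : thetak d V n itin lam k = 0).
    { destruct k. auto. rewrite Hthu, Hu0 by lia. ring. }
    specialize (Hu0 k Hk). unfold u in Hu0. lra. }
  assert (Hpos : 0 < rprod rho (2 * n)).
  { apply rprod_pos. intros i Hi. apply (Hfac i Hi). }
  split; auto.
  destruct (Rtotal_order lam 1) as [Hlt|[Heq|Hgt]].
  - destruct (Hex ltac:(lra)) as [i0 [Hi0 Hu]].
    assert (1 < rprod rho (2 * n)).
    { apply (rprod_gt1 rho (2 * n) i0); auto. intros i Hi. apply (Hfac i Hi); auto. apply (Hfac i0 Hi0); auto. }
    split; split; intro; lra.
  - assert (rprod rho (2 * n) = 1).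
    { rewrite (rprod_ext_lt rho (fun _ => 1)). clear. induction (2 * n)%nat; simpl; lra.
      intros i Hi. apply (Hfac i Hi); auto. }
    split; split; intro; lra.
  - destruct (Hex ltac:(lra)) as [i0 [Hi0 Hu]].
    assert (rprod rho (2 * n) < 1).
    { apply (rprod_lt1 rho (2 * n) i0); auto. intros i Hi. split. apply (Hfac i Hi). apply (Hfac i Hi); auto.
      apply (Hfac i0 Hi0); auto. }
    split; split; intro; lra.
Qed.
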